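(* Let $n>d\ge1$ and let $G$ be a connected graph with $n$ vertices and diameter $d$. Then $$\sigma_2(G)\ge g_2(d)+(n-1-d)\left\lceil\tfrac d2\right\rceil\left(\left\lceil\tfrac d2\right\rceil+1\right).$$ Equality holds for the tree consisting of a path $P$ of length $d$ plus $n-d-1$ leaves all adjacent to one vertex of $P$ of eccentricity $\lceil d/2\rceil$.
   Context: All graphs are finite, simple, undirected. For a connected graph $G$ and $u\in V(G)$, the eccentricity $\varepsilon_G(u)=\max_{v\in V(G)} d_G(u,v)$; the diameter is $\max_u\varepsilon_G(u)$. $\sigma_2(G)=\sum_{uv\in E(G)}\varepsilon_G(u)\varepsilon_G(v)$. Here $g_2(d)=\sum_{i=0}^{d-1}\max\{i,d-i\}\cdot\max\{i+1,d-i-1\}$ (the value of $\sigma_2$ on the path with $d$ edges), which equals $\frac{7d^3-4d}{12}$ for even $d$ and $\frac{7d^3-d+6}{12}$ for odd $d$. *)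

(* Defs.v *)
From mathcomp Require Import all_boot.
Set Implicit Arguments. Unset Strict Implicit. Unset Printing Implicit Defensive.

Section Graph.
Variables (T : finType) (e : rel T).

Fixpoint ball (k : nat) (u : T) : {set T} :=
  if k is k'.+1 then ball k' u :|: [set y | [exists x in ball k' u, e x y]]
  else [set u].

(* graph distance: least k such that v is within k steps of u
   (equals #|T| only if v is unreachable, which never happens in a
   connected graph) *)
Definition dist (u v : T) : nat := find (fun k => v \in ball k u) (iota 0 #|T|).

Definition connected : Prop := forall u v : T, connect e u v.

Definition ecc (u : T) : nat := \max_(v : T) dist u v.

Definition diameter : nat := \max_(u : T) ecc u.

Definition edges : {set {set T}} := [set E : {set T} | [exists u : T, exists v : T, e u v && (E == [set u; v])]].

Definition sigma2 : nat := \sum_(E in edges) \prod_(x in E) ecc x.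

End Graph.

Definition g2 (d : nat) : nat :=
  \sum_(i < d) maxn i (d - i) * maxn i.+1 (d - i.+1).

Definition sigma2_bound (n d : nat) : nat :=
  g2 d + (n - 1 - d) * (uphalf d * (uphalf d).+1).

(* The extremal tree on vertices 0..n-1: path 0-1-...-d, and every vertex
   i > d is a leaf adjacent to path vertex d./2 = floor(d/2), whose
   eccentricity on the path is max(floor(d/2), d - floor(d/2)) = ceil(d/2). *)
Definition extremal_tree (n d : nat) : rel 'I_n := fun i j =>
  [|| (i <= d) && (j <= d) && ((i.+1 == j :> nat) || (j.+1 == i :> nat)),
      (d < i) && (j == d./2 :> nat)
    | (d < j) && (i == d./2 :> nat)].
Arguments extremal_tree n d : clear implicits.

(* Main.v *)
Require Import Defs.
From mathcomp Require Import all_boot zify.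
Set Implicit Arguments. Unset Strict Implicit. Unset Printing Implicit Defensive.


Section Dist.
Variables (T : finType) (e : rel T).

Lemma ball_mono k m u : k <= m -> ball e k u \subset ball e m u.
Proof.
elim: m => [|m IH]; first by rewrite leqn0 => /eqP->.
rewrite leq_eqVlt => /orP[/eqP->//|/IH H].
apply: (subset_trans H); rewrite /= ; exact: subsetUl.
Qed.

Lemma ball_mem_mono k m u v : k <= m -> v \in ball e k u -> v \in ball e m u.
Proof. by move=> km /(subsetP (ball_mono u km)). Qed.

Lemma ball0 u : u \in ball e 0 u.
Proof. by rewrite /= inE. Qed.

Lemma ball_step k u x y : x \in ball e k u -> e x y -> y \in ball e k.+1 u.
Proof. move=> Hx Hxy; rewrite /= in_setU; apply/orP; right; rewrite inE; apply/existsP; exists x; by rewrite Hx. Qed.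

Lemma ball_comp i j u v w : v \in ball e i u -> w \in ball e j v -> w \in ball e (i + j) u.
Proof.
move=> Hv; elim: j w => [|j IH] w /=; first by rewrite addn0 inE => /eqP->.
rewrite addnS in_setU => /orP[/IH H|]; first exact: (ball_mem_mono (leqnSn _) H).
rewrite inE => /existsP[x /andP[Hx Hxw]]; exact: ball_step (IH _ Hx) Hxw.
Qed.

Lemma ball_path x p : path e x p -> last x p \in ball e (size p) x.
Proof.
elim: p x => [|y p IH] x /=; first by rewrite inE.
move=> /andP[Hxy Hp]; have H1 : y \in ball e 1 x by apply: (ball_step (ball0 x) Hxy).
exact: (ball_comp H1 (IH _ Hp)).
Qed.

Hypothesis esym : symmetric e.
Hypothesis econ : connected e.

Lemma ball_exists u v : exists2 k, k < #|T| & v \in ball e k u.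
Proof.
have /connectP[p Hp Hl] := econ u v.
rewrite Hl; case: (shortenP Hp) => p' Hp' Hu _.
exists (size p'); last exact: ball_path.
have := card_uniqP Hu; rewrite /= => <-; exact: max_card.
Qed.

Lemma inballE k u v : (v \in ball e k u) = (dist e u v <= k).
Proof.
have [k0 k0lt H0] := ball_exists u v.
set P := (fun k => v \in ball e k u).
have hasP : has P (iota 0 #|T|).
  apply/hasP; exists k0; last exact: H0. by rewrite mem_iota add0n.
have dlt : dist e u v < #|T|.
  move: hasP; rewrite has_find size_iota; exact.
have Hd : v \in ball e (dist e u v) u.
  have := nth_find 0 hasP; rewrite nth_iota; first by rewrite add0n.
  exact: dlt.
apply/idP/idP => [Hk|Hk]; last exact: ball_mem_mono Hk Hd.
case: (ltnP k #|T|) => [klt|kge]; last exact: (leq_trans (ltnW dlt) kge).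
rewrite leqNgt; apply/negP => Hlt.
have := before_find 0 Hlt; rewrite nth_iota; last exact: klt.
rewrite add0n => Hb. by rewrite /P Hk in Hb.
Qed.


Lemma dist_ball u v : v \in ball e (dist e u v) u.
Proof. by rewrite inballE. Qed.

Lemma dist_lt u v : dist e u v < #|T|.
Proof. have [k kl H] := ball_exists u v; rewrite inballE in H; exact: leq_ltn_trans H kl. Qed.

Lemma dist_uu u : dist e u u = 0.
Proof. by apply/eqP; rewrite -leqn0 -inballE ball0. Qed.

Lemma dist0 u v : dist e u v = 0 -> v = u.
Proof. move=> H; have := dist_ball u v; by rewrite H /= inE => /eqP. Qed.

Lemma dist_tri u v w : dist e u w <= dist e u v + dist e v w.
Proof. by rewrite -inballE; apply: ball_comp (dist_ball _ _) (dist_ball _ _). Qed.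

Lemma dist_adj u x y : e x y -> dist e u y <= (dist e u x).+1.
Proof. by move=> Hxy; rewrite -inballE; apply: ball_step (dist_ball _ _) Hxy. Qed.

Lemma ball_sym k u v : v \in ball e k u -> u \in ball e k v.
Proof.
elim: k u v => [|k IH] u v /=; first by rewrite !inE => /eqP->.
rewrite in_setU => /orP[/IH H|]; first by rewrite in_setU H.
rewrite inE => /existsP[x /andP[Hx Hxv]].
have H1 : x \in ball e 1 v by apply: (ball_step (ball0 v)); rewrite esym.
exact: (ball_comp H1 (IH _ _ Hx)).
Qed.

Lemma dist_sym u v : dist e u v = dist e v u.
Proof.
apply/eqP; rewrite eqn_leq; apply/andP; split; rewrite -inballE; apply: ball_sym; exact: dist_ball.
Qed.

Lemma dist_back u v : v != u -> exists x, e x v /\ (dist e u x).+1 = dist e u v.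
Proof.
move=> Hvu.
have Hpos : 0 < dist e u v.
  rewrite lt0n; apply/negP => /eqP /dist0 Hd; by rewrite Hd eqxx in Hvu.
have [k Hd] : exists k, dist e u v = k.+1 by exists (dist e u v).-1; rewrite prednK.
have := dist_ball u v; rewrite Hd.
move=> H; rewrite [ball _ _ _]/= in H.
move: H; rewrite in_setU => /orP[|].
  by rewrite inballE Hd ltnn.
rewrite inE => /existsP[x /andP[Hx Hxv]]; exists x; split => //.
rewrite inballE in Hx; apply/eqP; rewrite eqn_leq ltnS Hx -Hd; exact: dist_adj.
Qed.

Lemma dist_ecc u v : dist e u v <= ecc e u.
Proof. exact: (leq_bigmax (F := fun v => dist e u v)). Qed.

Lemma ecc_diam u : ecc e u <= diameter e.
Proof. exact: (leq_bigmax (F := fun u => ecc e u)). Qed.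

End Dist.

Lemma ball_connect (T : finType) (e : rel T) k u v : v \in ball e k u -> connect e u v.
Proof.
elim: k v => [|k IH] v /=; first by rewrite inE => /eqP->; exact: connect0.
rewrite in_setU => /orP[/IH //|]; rewrite inE => /existsP[x /andP[Hx Hxv]].
apply: connect_trans (IH _ Hx) _; exact: connect1.
Qed.

Lemma dist_char (T : finType) (e : rel T) (dl : T -> T -> nat) :
  (forall u, dl u u = 0) ->
  (forall u v, v != u -> exists x, e x v /\ (dl u x).+1 = dl u v) ->
  (forall u x y, e x y -> dl u y <= (dl u x).+1) ->
  connected e /\ (forall u v, dist e u v = dl u v).
Proof.
move=> H0 Hp Hs.
have Hin : forall k u v, dl u v <= k -> v \in ball e (dl u v) u.
  elim=> [|k IH] u v Hk.
    case: (eqVneq v u) => [->|Hvu]; first by rewrite H0 /= inE.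
    have [x [_ Hx]] := Hp u v Hvu; lia.
  case: (eqVneq v u) => [->|Hvu]; first by rewrite H0 /= inE.
  have [x [Hxv Hx]] := Hp u v Hvu.
  rewrite -Hx; apply: ball_step Hxv; apply: IH; lia.
have Hout : forall k u v, v \in ball e k u -> dl u v <= k.
  elim=> [|k IH] u v /=; first by rewrite inE => /eqP->; rewrite H0.
  rewrite in_setU => /orP[/IH H|]; first by apply: leq_trans H _.
  rewrite inE => /existsP[x /andP[Hx Hxv]].
  apply: leq_trans (Hs u x v Hxv) _; rewrite ltnS; exact: IH.
have Hcon : connected e.
  move=> u v; apply: (ball_connect (k := dl u v)); exact: (Hin _ _ _ (leqnn _)).
split => // u v; apply/eqP; rewrite eqn_leq; apply/andP; split.
  rewrite -(inballE Hcon); exact: (Hin _ _ _ (leqnn _)).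
apply: Hout; exact: (dist_ball Hcon).
Qed.

Lemma bigmax_eq (I : finType) (F : I -> nat) M i0 :
  (forall i, F i <= M) -> F i0 = M -> \max_i F i = M.
Proof.
move=> Hle Hi0; apply/eqP; rewrite eqn_leq; apply/andP; split.
  by apply/bigmax_leqP => i _; exact: Hle.
by rewrite -Hi0; exact: (leq_bigmax (F := F) i0).
Qed.

Definition fE (T : finType) (e : rel T) (E : {set T}) := \prod_(x in E) ecc e x.

Lemma fE2 (T : finType) (e : rel T) x y : x != y -> fE e [set x; y] = ecc e x * ecc e y.
Proof.
move=> Hxy; rewrite /fE big_setU1 ?big_set1 //.
by rewrite inE.
Qed.


Lemma r_facts d : 1 <= d -> [/\ d <= uphalf d + uphalf d, uphalf d + uphalf d <= d.+1 & 0 < uphalf d].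
Proof.
move=> Hd; split.
- by rewrite addnn -leq_uphalf_double.
- by rewrite addnn -geq_uphalf_double.
- by rewrite uphalf_gt0.
Qed.

Lemma myDisjP (U : finType) (A B : {pred U}) :
  (forall x, x \in A -> x \in B -> False) -> [disjoint A & B].
Proof. move=> H; apply/pred0P => x /=; apply/negP => /andP[H1 H2]; exact: H x H1 H2. Qed.

Section Main.
Variables (T : finType) (e : rel T).
Hypotheses (esym : symmetric e) (eirr : irreflexive e) (econ : connected e).
Variable d : nat.
Hypothesis Hd1 : 1 <= d.
Variables (a b : T).
Hypothesis Hab : dist e a b = d.

Lemma ecc_ge_r w : uphalf d <= ecc e w.
Proof.
have h1 := dist_tri econ a w b.
have h2 := dist_ecc e w a. have h3 := dist_ecc e w b.
rewrite (dist_sym esym econ a w) Hab in h1.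
rewrite leq_uphalf_double -addnn. lia.
Qed.

Lemma edge_ne x y : e x y -> x != y.
Proof. by move=> H; apply/eqP => Exy; rewrite Exy eirr in H. Qed.

Lemma edge_in x y : e x y -> [set x; y] \in edges e.
Proof. move=> H; rewrite inE; apply/existsP; exists x; apply/existsP; exists y; by rewrite H eqxx. Qed.

Definition SS (phi : T -> nat) (w : T) : {set {set T}} :=
  [set E in edges e | (w \in E) && [forall x in E, (x != w) ==> (phi x < phi w)]].

Lemma SS_in phi w x : e x w -> phi x < phi w -> [set x; w] \in SS phi w.
Proof.
move=> Hxw Hlt; rewrite inE edge_in //= !inE eqxx orbT /=.
apply/forallP => y; apply/implyP; rewrite !inE => /orP[/eqP->|/eqP->]; last by rewrite eqxx.
by rewrite Hlt implybT.
Qed.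

Lemma Sw_bound (phi : T -> nat) u v w : dist e u v = d -> w != u ->
  phi w = dist e u w -> (forall x, phi x <= dist e u x) -> (forall x, phi x <= dist e v x) ->
  uphalf d * (uphalf d).+1 <= \sum_(E in SS phi w) fE e E.
Proof.
move=> Huv Hwu Hpw H1 H2.
have [rf1 rf2 rf3] := r_facts Hd1.
set r := uphalf d in rf1 rf2 rf3 *.
have [x [Hxw Hx]] := dist_back econ Hwu.
have Hxin : [set x; w] \in SS phi w.
  apply: SS_in => //; rewrite Hpw -Hx; exact: leq_ltn_trans (H1 x) (ltnSn _).
have Hfx : fE e [set x; w] = ecc e x * ecc e w by rewrite fE2; last exact: edge_ne.
have Hsum1 : fE e [set x; w] <= \sum_(E in SS phi w) fE e E.
  by rewrite (bigD1 _ Hxin) /= leq_addr.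
have Ex := ecc_ge_r x. have Ew := ecc_ge_r w.
case: (ltnP r (ecc e w)) => [Hgt|Hle].
  apply: leq_trans Hsum1; rewrite Hfx; have := leq_mul Ex Hgt; nia.
have Hk : dist e u w <= r.
  by rewrite (dist_sym esym econ); apply: leq_trans (dist_ecc _ _ _) Hle.
case: (ltnP (dist e u w) r) => [Hk2|Hk2].
  apply: leq_trans Hsum1; rewrite Hfx.
  have t1 := dist_tri econ u x v. have t2 := dist_ecc e x v.
  rewrite Huv in t1. have Hx2 : r < ecc e x by lia.
  have := leq_mul Hx2 Ew; nia.
have Hkr : dist e u w = r by apply/eqP; rewrite eqn_leq Hk Hk2.
have Hvw : dist e v w = r.
  apply/eqP; rewrite eqn_leq; apply/andP; split.
    by rewrite (dist_sym esym econ); apply: leq_trans (dist_ecc _ _ _) Hle.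
  by rewrite -Hkr -Hpw.
have Hwv : w != v.
  apply/eqP => Ewv; rewrite Ewv dist_uu // in Hvw; lia.
have [y [Hyw Hy]] := dist_back econ Hwv.
have Hyin : [set y; w] \in SS phi w.
  apply: SS_in => //; rewrite Hpw Hkr -Hvw -Hy; exact: leq_ltn_trans (H2 y) (ltnSn _).
have Hfy : fE e [set y; w] = ecc e y * ecc e w by rewrite fE2; last exact: edge_ne.
have Hxy : x != y.
  apply/eqP => Exy; rewrite -Exy in Hy.
  have t1 := dist_tri econ u x v. rewrite Huv (dist_sym esym econ x v) in t1. lia.
have Hne : [set y; w] != [set x; w].
  apply/negP => /eqP Es.
  have : x \in [set y; w] by rewrite Es !inE eqxx.
  rewrite !inE => /orP[/eqP Exy|/eqP Exw].
    by rewrite Exy eqxx in Hxy.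
  by move: (edge_ne Hxw); rewrite Exw eqxx.
have Hsum2 : fE e [set x; w] + fE e [set y; w] <= \sum_(E in SS phi w) fE e E.
  rewrite (bigD1 _ Hxin) /= leq_add2l (bigD1 _ (_ : [set y; w] \in [pred E in SS phi w | E != [set x; w]])) /=.
    exact: leq_addr.
  by rewrite inE Hyin Hne.
apply: leq_trans Hsum2; rewrite Hfx Hfy.
have := leq_mul Ex Ew. have := leq_mul (ecc_ge_r y) Ew. nia.
Qed.


Definition back (v : T) : T := odflt v [pick x | e x v && ((dist e a x).+1 == dist e a v)].

Lemma back_spec v : v != a -> e (back v) v /\ (dist e a (back v)).+1 = dist e a v.
Proof.
move=> Hva; rewrite /back; case: pickP => [x /andP[H1 /eqP H2]|H] //=.
have [x [H1 H2]] := dist_back econ Hva.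
by have := H x; rewrite H1 H2 eqxx.
Qed.

Definition q (j : nat) : T := iter j back b.

Lemma q_dist j : j <= d -> dist e a (q j) = d - j.
Proof.
elim: j => [|j IH] Hj; first by rewrite subn0.
have IH' := IH (ltnW Hj).
have Hne : q j != a.
  apply/eqP => Eq; rewrite Eq dist_uu // in IH'; lia.
have [_ H2] := back_spec Hne.
rewrite /q iterS -/(q j). lia.
Qed.

Definition p (i : nat) : T := q (d - i).

Lemma p_dist i : i <= d -> dist e a (p i) = i.
Proof. move=> Hi; rewrite /p q_dist; lia. Qed.

Lemma p_edge i : i < d -> e (p i) (p i.+1).
Proof.
move=> Hi.
have Hne : p i.+1 != a.
  apply/eqP => Eq; have := p_dist Hi; rewrite Eq dist_uu //.
have [H1 _] := back_spec Hne.
have -> : p i = back (p i.+1) by rewrite /p /q -iterS subnSK.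
exact: H1.
Qed.

Lemma p_inj i j : i <= d -> j <= d -> p i = p j -> i = j.
Proof. move=> Hi Hj Eq; rewrite -(p_dist Hi) -(p_dist Hj) Eq. done. Qed.

Lemma p0 : p 0 = a.
Proof. by apply: (dist0 econ); rewrite p_dist. Qed.

Lemma pd : p d = b.
Proof. by rewrite /p subnn. Qed.

Lemma ecc_p i : i <= d -> maxn i (d - i) <= ecc e (p i).
Proof.
move=> Hi; rewrite geq_max; apply/andP; split.
  by rewrite -{1}(p_dist Hi) (dist_sym esym econ); exact: dist_ecc.
have t := dist_tri econ a (p i) b; rewrite Hab p_dist // in t.
have := dist_ecc e (p i) b. lia.
Qed.

Definition Pset : {set T} := [set p (val i) | i : 'I_d.+1].
Definition PE : {set {set T}} := [set [set p (val i); p (val i).+1] | i : 'I_d].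
Definition phi (x : T) := minn (dist e a x) (dist e b x).
Definition FF (w : T) : {set {set T}} := if w \in Pset then set0 else SS phi w.

Lemma Pset_card : #|Pset| = d.+1.
Proof.
rewrite card_imset ?card_ord //.
move=> i j /p_inj H; apply/val_inj; apply: H; rewrite -ltnS; exact: ltn_ord.
Qed.

Lemma inPset i : i <= d -> p i \in Pset.
Proof. move=> Hi; apply/imsetP; exists (Ordinal (n:=d.+1) (m:=i) Hi) => //. Qed.

Lemma FF_bound w : w \notin Pset -> uphalf d * (uphalf d).+1 <= \sum_(E in FF w) fE e E.
Proof.
move=> Hw; rewrite /FF (negbTE Hw).
have Hwa : w != a by apply/eqP => Ew; rewrite Ew -p0 inPset in Hw.
have Hwb : w != b by apply/eqP => Ew; rewrite Ew -pd inPset in Hw.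
case: (leqP (dist e a w) (dist e b w)) => Hle.
  apply: (Sw_bound (u:=a) (v:=b)) => //.
  - by rewrite /phi; apply/minn_idPl.
  - by move=> x; rewrite /phi geq_minl.
  - by move=> x; rewrite /phi geq_minr.
apply: (Sw_bound (u:=b) (v:=a)) => //.
- by rewrite (dist_sym esym econ).
- by rewrite /phi; apply/minn_idPr; exact: ltnW.
- by move=> x; rewrite /phi geq_minr.
- by move=> x; rewrite /phi geq_minl.
Qed.

Lemma FF_disj w w' : w != w' -> [disjoint FF w & FF w'].
Proof.
move=> Hww; rewrite /FF.
apply: myDisjP => E.
case: (w \in Pset); first by rewrite inE.
case: (w' \in Pset); first by move=> _; rewrite inE.
rewrite !inE => /andP[_ /andP[Hw Hf]] /andP[_ /andP[Hw' Hf']].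
have := forallP Hf w'; rewrite Hw' eq_sym Hww /= => H1.
have := forallP Hf' w; rewrite Hw Hww /= => H2.
lia.
Qed.

Lemma part1_main : d < #|T| -> g2 d + (#|T| - 1 - d) * (uphalf d * (uphalf d).+1) <= sigma2 e.
Proof.
move=> HdT.
set Q := \bigcup_(w : T) FF w.
have HPE : PE \subset edges e.
  apply/subsetP => E /imsetP[i _ ->]; apply: edge_in; apply: p_edge; exact: ltn_ord.
have HQ : Q \subset edges e.
  apply/subsetP => E /bigcupP[w _]; rewrite /FF; case: (w \in Pset); first by rewrite inE.
  by rewrite inE => /andP[].
have Hdisj : [disjoint PE & Q].
  apply: myDisjP => E /imsetP[i _ ->] /bigcupP[w _]; rewrite /FF.
  case Hw: (w \in Pset); first by rewrite inE.
  rewrite inE => /andP[_ /andP[]]; rewrite !inE => /orP[/eqP Ew|/eqP Ew] _.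
    by rewrite Ew inPset // in Hw; apply: ltnW; exact: ltn_ord.
  by rewrite Ew inPset // in Hw; exact: ltn_ord.
have S1 : \sum_(E in PE :|: Q) fE e E <= sigma2 e.
  have -> : sigma2 e = \sum_(E in edges e) fE e E by [].
  rewrite [X in _ <= X](big_setID (PE :|: Q)) /=.
  have E1 : edges e :&: (PE :|: Q) = PE :|: Q.
    apply/setIidPr; by rewrite subUset HPE HQ.
  rewrite [X in _ <= X + _](eq_bigl (fun E => E \in PE :|: Q)); first exact: leq_addr.
  by move=> E; rewrite E1.
have S2 : \sum_(E in PE :|: Q) fE e E = \sum_(E in PE) fE e E + \sum_(E in Q) fE e E.
  rewrite -bigU //; apply: eq_bigl => E; by rewrite !inE.
have S3 : g2 d <= \sum_(E in PE) fE e E.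
  rewrite big_imset /=.
    rewrite /g2; apply: leq_sum => i _.
    have Hi := ltn_ord i.
    rewrite fE2; first by apply: leq_mul; apply: ecc_p; lia.
    apply/eqP => /p_inj H; have := H (ltnW Hi) Hi; lia.
  move=> i j _ _ Eij; apply: ord_inj.
  have Hi := ltn_ord i. have Hj := ltn_ord j.
  have : p i \in [set p j; p j.+1] by rewrite -Eij !inE eqxx.
  have : p j \in [set p i; p i.+1] by rewrite Eij !inE eqxx.
  have Hi' := ltnW Hi. have Hj' := ltnW Hj.
  have Di := p_dist Hi'. have Di1 := p_dist Hi. have Dj := p_dist Hj'. have Dj1 := p_dist Hj.
  rewrite !inE => /orP[/eqP/(congr1 (dist e a)) A|/eqP/(congr1 (dist e a)) A]
    /orP[/eqP/(congr1 (dist e a)) B|/eqP/(congr1 (dist e a)) B];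
    rewrite ?Di ?Di1 ?Dj ?Dj1 in A B; lia.
have S4 : (#|T| - 1 - d) * (uphalf d * (uphalf d).+1) <= \sum_(E in Q) fE e E.
  rewrite partition_disjoint_bigcup; last exact: FF_disj.
  apply: (@leq_trans (\sum_(w : T) (if w \notin Pset then uphalf d * (uphalf d).+1 else 0))).
    rewrite -big_mkcond sum_nat_const /=.
    have -> : #|[pred w | w \notin Pset]| = #|~: Pset| by apply: eq_card => w; rewrite !inE.
    rewrite cardsCs setCK Pset_card; apply: leq_mul => //; by rewrite -subnDA add1n.
  apply: leq_sum => w _; case: ifP => Hw //; exact: FF_bound.
rewrite S2 in S1. lia.
Qed.

End Main.


Section TreeN.
Variable d : nat.

Definition Rn (i j : nat) : bool :=
  [|| (i <= d) && (j <= d) && ((i.+1 == j) || (j.+1 == i)),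
      (d < i) && (j == d./2)
    | (d < j) && (i == d./2)].

Definition pos (i : nat) := if d < i then d./2 else i.
Definition lev (i : nat) := if d < i then 1 else 0.
Definition D (i j : nat) := if i == j then 0 else (pos i - pos j) + (pos j - pos i) + lev i + lev j.

Ltac dsolve := rewrite /D /pos /lev; repeat (case: ifP => [?|/negbT ?]); lia.

Lemma Rn_sym i j : Rn i j = Rn j i.
Proof. rewrite /Rn; case: (i <= d); case: (j <= d); case: (i.+1 == j); case: (j.+1 == i); case: (d < i); case: (j == d./2); case: (d < j); by case: (i == d./2). Qed.

Lemma Rn_irr i : Rn i i = false.
Proof. apply/negbTE; rewrite /Rn; apply/or3P => [[/andP[_ /orP[]]|/andP[]|/andP[]]]; lia. Qed.

Lemma D_refl u : D u u = 0.
Proof. by rewrite /D eqxx. Qed.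

Lemma D_step u x y : Rn x y -> D u y <= (D u x).+1.
Proof.
move/or3P => [/andP[/andP[Hx Hy] /orP[/eqP E|/eqP E]] | /andP[Hx /eqP E] | /andP[Hy /eqP E]]; subst; dsolve.
Qed.

Lemma Rn_path i j : i <= d -> j <= d -> (i.+1 = j \/ j.+1 = i) -> Rn i j.
Proof. move=> Hi Hj H; rewrite /Rn Hi Hj /=; case: H => ->; by rewrite eqxx ?orbT. Qed.

Lemma Rn_leaf1 i j : d < i -> j = d./2 -> Rn i j.
Proof. move=> Hi ->; by rewrite /Rn Hi eqxx orbT. Qed.

Lemma Rn_leaf2 i j : d < j -> i = d./2 -> Rn i j.
Proof. move=> Hj ->; by rewrite /Rn Hj eqxx !orbT. Qed.

Lemma D_pred u v : v != u -> exists x, [/\ x <= maxn u v, Rn x v & (D u x).+1 = D u v].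
Proof.
move=> Hvu.
case: (leqP u d) => Hu; case: (leqP v d) => Hv.
- case: (ltnP u v) => Huv.
    exists v.-1; split; [lia | apply: Rn_path; lia | dsolve].
  exists v.+1; split; [lia | apply: Rn_path; lia | dsolve].
- exists d./2; split; [lia | apply: Rn_leaf2; lia | dsolve].
- have [Hvc|Hvc|Hvc] := ltngtP v d./2.
  + exists v.+1; split; [lia | apply: Rn_path; lia | dsolve].
  + exists v.-1; split; [lia | apply: Rn_path; lia | dsolve].
  + exists u; split; [lia | apply: Rn_leaf1; lia | dsolve].
- exists d./2; split; [lia | apply: Rn_leaf2; lia | dsolve].
Qed.

End TreeN.

Section Tree.
Variables m d : nat.
Hypotheses (Hd1 : 1 <= d) (Hdm : d <= m) (Hleaf : d < m -> 2 <= d).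

Local Notation G := (extremal_tree m.+1 d).

Lemma G_Rn (i j : 'I_m.+1) : G i j = Rn d i j.
Proof. by []. Qed.

Lemma G_sym : symmetric G.
Proof. move=> i j; rewrite !G_Rn; exact: Rn_sym. Qed.

Lemma G_irr : irreflexive G.
Proof. move=> i; rewrite G_Rn; exact: Rn_irr. Qed.

Lemma G_dist : connected G /\ (forall u v : 'I_m.+1, dist G u v = D d u v).
Proof.
have H := (dist_char (e := G) (dl := fun u v : 'I_m.+1 => D d u v)).
apply: H.
- move=> u; exact: D_refl.
- move=> u v Hvu.
  have Hvu' : val v != (u : nat) by [].
  have [x [Hx HR HD]] := D_pred d Hvu'.
  have Hxm : x < m.+1.
    apply: leq_ltn_trans Hx _; rewrite gtn_max; apply/andP; split; exact: ltn_ord.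
  exists (Ordinal Hxm); split.
    exact: HR.
  exact: HD.
- move=> u x y Hxy. apply: D_step. exact: Hxy.
Qed.

Definition EccN (k : nat) := if k <= d then maxn k (d - k) else (uphalf d).+1.

Lemma D_le u v : u <= m -> v <= m -> D d u v <= EccN u.
Proof.
move=> Hu Hv; rewrite /EccN uphalfE.
case: (ltnP d m) => Hm; [have := Hleaf Hm|]; rewrite /D /pos /lev; repeat (case: ifP => [?|/negbT ?]); lia.
Qed.

Lemma G_ecc (u : 'I_m.+1) : ecc G u = EccN u.
Proof.
have Hu : (u : nat) <= m by rewrite -ltnS ltn_ord.
rewrite /ecc.
have [v Hv] : exists v : 'I_m.+1, D d u v = EccN u.
  case: (leqP ((u : nat)) d) => Hud.
    case: (leqP ((u : nat)) (d - (u : nat))) => Hc.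
      have Hdl : d < m.+1 by rewrite ltnS.
      exists (Ordinal Hdl); rewrite /= /EccN Hud /D /pos /lev; repeat (case: ifP => [?|/negbT ?]); lia.
    exists ord0; rewrite /= /EccN Hud /D /pos /lev ?ltn0; repeat (case: ifP => [?|/negbT ?]); lia.
  have Hdl : d < m.+1 by rewrite ltnS.
  exists (Ordinal Hdl); rewrite /= /EccN uphalfE /D /pos /lev; repeat (case: ifP => [?|/negbT ?]); lia.
apply: (bigmax_eq (i0 := v)).
  move=> i; rewrite (proj2 G_dist); apply: D_le => //; by rewrite -ltnS ltn_ord.
by rewrite (proj2 G_dist).
Qed.

Lemma G_diam : diameter G = d.
Proof.
rewrite /diameter; apply: (bigmax_eq (i0 := ord0)).
  move=> i; rewrite G_ecc /EccN uphalfE.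
  have Hi : (i : nat) <= m by rewrite -ltnS ltn_ord.
  case: (ltnP d m) => Hm; [have := Hleaf Hm|]; repeat (case: ifP => [?|/negbT ?]); lia.
by rewrite G_ecc /EccN /= subn0 max0n.
Qed.

Definition parN (k : nat) := if k <= d then k.-1 else d./2.
Definition par (j : 'I_m.+1) : 'I_m.+1 := inord (parN j).

Lemma par_val (j : 'I_m.+1) : (par j : nat) = parN j.
Proof.
have Hj : (j : nat) <= m by rewrite -ltnS ltn_ord.
rewrite /par inordK // ltnS /parN; case: ifP => ?; lia.
Qed.

Definition J : {set 'I_m.+1} := [set j : 'I_m.+1 | (j : nat) != 0].

Lemma par_edge (j : 'I_m.+1) : j \in J -> G j (par j).
Proof.
rewrite inE => Hj; rewrite G_Rn par_val /parN; case: ifP => Hjd.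
  apply: Rn_path => //; lia.
apply: Rn_leaf1 => //; lia.
Qed.

Lemma par_ne (j : 'I_m.+1) : j \in J -> j != par j.
Proof.
rewrite inE => Hj; apply/eqP => /(congr1 val); rewrite /= par_val /parN; case: ifP => ?; lia.
Qed.

Lemma edgesG : edges G = [set [set j; par j] | j in J].
Proof.
apply/setP => E; apply/idP/idP.
- rewrite inE => /existsP[u /existsP[v /andP[Huv /eqP ->]]].
  rewrite G_Rn in Huv.
  move/or3P: Huv => [/andP[/andP[Hu Hv] /orP[/eqP E1|/eqP E1]] | /andP[Hu /eqP E1] | /andP[Hv /eqP E1]].
  + apply/imsetP; exists v; first by rewrite inE; lia.
    have -> : par v = u by apply: val_inj; rewrite /= par_val /parN; case: ifP => ?; lia.
    by rewrite setUC.
  + apply/imsetP; exists u; first by rewrite inE; lia.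
    have -> : par u = v by apply: val_inj; rewrite /= par_val /parN; case: ifP => ?; lia.
    by [].
  + apply/imsetP; exists u; first by rewrite inE; lia.
    have -> : par u = v by apply: val_inj; rewrite /= par_val /parN; case: ifP => ?; lia.
    by [].
  + apply/imsetP; exists v; first by rewrite inE; lia.
    have -> : par v = u by apply: val_inj; rewrite /= par_val /parN; case: ifP => ?; lia.
    by rewrite setUC.
- move/imsetP => [j Hj ->]; rewrite inE; apply/existsP; exists j; apply/existsP; exists (par j).
  by rewrite par_edge // eqxx.
Qed.

Lemma sigma2G : sigma2 G = \sum_(j in J) EccN j * EccN (parN j).
Proof.
have -> : sigma2 G = \sum_(E in edges G) fE G E by [].
rewrite edgesG big_imset /=.
  apply: eq_bigr => j Hj; rewrite fE2; last exact: par_ne.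
  by rewrite !G_ecc par_val.
move=> i j Hi Hj Eij.
have A : (i : 'I_m.+1) \in [set j; par j] by rewrite -Eij !inE eqxx.
have B : (j : 'I_m.+1) \in [set i; par i] by rewrite Eij !inE eqxx.
move: Hi Hj; rewrite !inE in A B * => Hi Hj.
case/orP: A => [/eqP //|/eqP /(congr1 val) A].
case/orP: B => [/eqP -> //|/eqP /(congr1 val) B].
move: A B; rewrite /= !par_val /parN; case: ifP => ?; case: ifP => ?; lia.
Qed.

Lemma sum_tree : \sum_(j in J) EccN j * EccN (parN j) = g2 d + (m.+1 - 1 - d) * (uphalf d * (uphalf d).+1).
Proof.
set H := fun k => EccN k * EccN (parN k).
have -> : \sum_(j in J) EccN j * EccN (parN j) = \sum_(j < m.+1 | (j : nat) != 0) H j.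
  by apply: eq_bigl => j; rewrite inE.
rewrite -(big_mkord (fun j => j != 0) H).
rewrite (big_cat_nat (n := d.+1)) //.
congr (_ + _).
  rewrite big_mkcond big_nat_recl //= add0n /g2 -(big_mkord (fun _ => true) (fun i => maxn i (d - i) * maxn i.+1 (d - i.+1))).
  apply: eq_big_nat => i /andP[_ Hi].
  have E1 : EccN i.+1 = maxn i.+1 (d - i.+1) by rewrite /EccN Hi.
  have E2 : parN i.+1 = i by rewrite /parN Hi.
  have E3 : EccN i = maxn i (d - i) by rewrite /EccN ltnW.
  by rewrite /H E1 E2 E3 mulnC.
rewrite big_mkcond (eq_big_nat _ _ (F2 := fun _ => uphalf d * (uphalf d).+1)).
  rewrite sum_nat_const_nat; congr (_ * _); lia.
move=> j /andP[Hj1 Hj2].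
have Hj0 : j != 0 by lia.
have E1 : EccN j = (uphalf d).+1 by rewrite /EccN leqNgt Hj1.
have E2 : EccN (parN j) = uphalf d.
  rewrite /parN leqNgt Hj1 /= /EccN uphalfE; case: ifP => ?; lia.
by rewrite Hj0 /H E1 E2 mulnC.
Qed.

End Tree.

Unset Implicit Arguments.
Theorem corollary3p3 :
  (forall (T : finType) (e : rel T),
      symmetric e -> irreflexive e -> connected e ->
      forall d : nat, diameter e = d -> 1 <= d -> d < #|T| ->
      sigma2_bound #|T| d <= sigma2 e)
  /\
  (forall n d : nat, 1 <= d -> d < n -> (2 <= d \/ n = d.+1) ->
      [/\ symmetric (extremal_tree n d), irreflexive (extremal_tree n d),
          connected (extremal_tree n d),
          diameter (extremal_tree n d) = d
        & sigma2 (extremal_tree n d) = sigma2_bound n d]).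
Proof.
split.
  move=> T e esym eirr econ d Hdiam Hd1 HdT.
  have Tpos : 0 < #|T| by apply: leq_ltn_trans HdT.
  have [a Ha] := eq_bigmax (fun u => ecc e u) Tpos.
  have [b Hb] := eq_bigmax (fun v => dist e a v) Tpos.
  have Hab : dist e a b = d.
    rewrite -Hdiam; rewrite /diameter Ha /ecc Hb. by [].
  exact: (part1_main esym eirr econ Hd1 Hab HdT).
move=> n d Hd1 Hdn Hor.
case: n Hdn Hor => [//|m] Hdn Hor.
have Hdm : d <= m by rewrite -ltnS.
have Hleaf : d < m -> 2 <= d by case: Hor => // [[E]] H; lia.
split.
- exact: G_sym.
- exact: G_irr.
- exact: (proj1 (G_dist m d)).
- exact: G_diam.
- by rewrite (sigma2G Hd1 Hdm Hleaf) (sum_tree Hd1 Hdm Hleaf).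
Qed.
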